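(* Let $M\subseteq\mathbb{R}^n$ be a closed convex set, $\alpha\ge0$, $p\in\mathbb{R}^n$, and $M'=(1+\alpha)M+p$, and assume $\operatorname{aff}(M)\ne\operatorname{aff}(M')$. Let $P=\operatorname{conv}(M\cup M')$. Then: (a) $P=\bigcup_{0\le\mu\le1}\big((1+\mu\alpha)M+\mu p\big)$. (b) Every $f\in P$ can be written as $f=(1+\mu\alpha)x+\mu p$ for some $0\le\mu\le1$ and $x\in M$. Furthermore, if $f=(1+\mu\alpha)x+\mu p$ with $x\in M$ and $\frac13\le\mu\le1$, then \[\tfrac14P+\tfrac34f\subseteq\operatorname{conv}(\{x\}\cup M')\subseteq P.\] *)

(* Defs.v *)
From HB Require Import structures.
From mathcomp Require Import all_boot all_order all_algebra.
From mathcomp Require Import all_classical all_reals all_analysis.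
Set Implicit Arguments. Unset Strict Implicit. Unset Printing Implicit Defensive.
Import Order.TTheory GRing.Theory Num.Theory.
Import numFieldTopology.Exports.
Local Open Scope classical_set_scope.
Local Open Scope ring_scope.

Definition convexR (R : realType) (n : nat) (C : set 'rV[R]_n) : Prop :=
  forall x y (t : R), C x -> C y -> 0 <= t -> t <= 1 ->
    C (t *: x + (1 - t) *: y).

Definition affineR (R : realType) (n : nat) (C : set 'rV[R]_n) : Prop :=
  forall x y (t : R), C x -> C y -> C (t *: x + (1 - t) *: y).

Definition conv_hull (R : realType) (n : nat) (A : set 'rV[R]_n) : set 'rV[R]_n :=
  [set z | forall C, convexR C -> A `<=` C -> C z].

Definition aff_hull (R : realType) (n : nat) (A : set 'rV[R]_n) : set 'rV[R]_n :=
  [set z | forall C, affineR C -> A `<=` C -> C z].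

Definition scale_shift (R : realType) (n : nat) (c : R) (A : set 'rV[R]_n)
  (p : 'rV[R]_n) : set 'rV[R]_n := [set c *: x + p | x in A].

(* Main.v *)
Require Import Defs.
From HB Require Import structures.
From mathcomp Require Import all_boot all_order all_algebra.
From mathcomp Require Import all_classical all_reals all_analysis.
From mathcomp Require Import ring lra.
Import Order.TTheory GRing.Theory Num.Theory.
Import numFieldTopology.Exports.
Local Open Scope classical_set_scope.
Local Open Scope ring_scope.

Lemma conv_sub (R : realType) (n : nat) (A : set 'rV[R]_n) : A `<=` conv_hull A.
Proof. by move=> z Az C _ HAC; exact: HAC. Qed.

Lemma conv_comb (R : realType) (n : nat) (A : set 'rV[R]_n) a b (t : R) :
  A a -> A b -> 0 <= t -> t <= 1 -> conv_hull A (t *: a + (1 - t) *: b).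
Proof. by move=> Aa Ab t0 t1 C cC HAC; apply: cC => //; apply: HAC. Qed.

Lemma conv_convex (R : realType) (n : nat) (A : set 'rV[R]_n) : convexR (conv_hull A).
Proof. move=> x y t hx hy t0 t1 C cC HAC; exact: (cC x y t (hx C cC HAC) (hy C cC HAC) t0 t1). Qed.

Lemma conv_min (R : realType) (n : nat) (A C : set 'rV[R]_n) :
  convexR C -> A `<=` C -> conv_hull A `<=` C.
Proof. by move=> cC HAC z hz; apply: hz. Qed.

Theorem lemma5p2 (R : realType) (n : nat) (M : set 'rV[R]_n) (alpha : R)
  (p : 'rV[R]_n) :
  closed M -> convexR M -> 0 <= alpha ->
  aff_hull M <> aff_hull (scale_shift (1 + alpha) M p) ->
  let M' := scale_shift (1 + alpha) M p in
  let P := conv_hull (M `|` M') in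
  (* (a) *)
  P = \bigcup_(mu in [set mu : R | 0 <= mu <= 1])
        scale_shift (1 + mu * alpha) M (mu *: p)
  (* (b) *)
  /\ (forall f, P f -> exists mu x, 0 <= mu <= 1 /\ M x /\
        f = (1 + mu * alpha) *: x + mu *: p)
  /\ (forall f x (mu : R), M x -> 3^-1 <= mu -> mu <= 1 ->
        f = (1 + mu * alpha) *: x + mu *: p ->
        [set 4^-1 *: y + (3 / 4) *: f | y in P] `<=` conv_hull (x |` M')
        /\ conv_hull (x |` M') `<=` P).
Proof.
move=> _ convM a0 _ M' P.
have Ueq : P = \bigcup_(mu in [set mu : R | 0 <= mu <= 1])
        scale_shift (1 + mu * alpha) M (mu *: p).
  apply/seteqP; split.
  - apply: conv_min.
    + move=> y1 y2 t [m1 /andP[m10 m11] [x1 Mx1 <-]] [m2 /andP[m20 m21] [x2 Mx2 <-]] t0 t1.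
      exists (t * m1 + (1 - t) * m2); first by apply/andP; split; nra.
      pose a := t * (1 + m1 * alpha); pose b := (1 - t) * (1 + m2 * alpha).
      have e1 : 1 <= 1 + m1 * alpha by rewrite lerDl mulr_ge0.
      have e2 : 1 <= 1 + m2 * alpha by rewrite lerDl mulr_ge0.
      have a0' : 0 <= a by rewrite /a mulr_ge0 //; lra.
      have b0' : 0 <= b by rewrite /b mulr_ge0 //; lra.
      have s0 : 0 < a + b by rewrite /a /b; nra.
      exists ((a / (a + b)) *: x1 + (1 - a / (a + b)) *: x2).
        apply: convM => //; first by apply: divr_ge0 => //; exact: ltW.
        by rewrite ler_pdivrMr // mul1r lerDl.
      have sn0 : a + b != 0 by rewrite gt_eqF.
      apply/rowP => i; rewrite !mxE /a /b in sn0 *.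
      by field.
    + move=> z [Mz|[x Mx <-]].
      * exists 0; first by rewrite /= lexx ler01.
        by exists z => //; rewrite mul0r addr0 scale1r scale0r addr0.
      * exists 1; first by rewrite /= ler01 lexx.
        by exists x => //; rewrite mul1r scale1r.
  - move=> z [mu /andP[mu0 mu1] [x Mx <-]].
    have -> : (1 + mu * alpha) *: x + mu *: p =
              mu *: ((1 + alpha) *: x + p) + (1 - mu) *: x.
      by apply/rowP => i; rewrite !mxE; ring.
    by apply: conv_comb => //; [right; exists x | left].
split; first exact: Ueq.
split.
  move=> f; rewrite Ueq => -[mu mub [x Mx <-]].
  by exists mu, x.
move=> f x mu Mx mu3 mu1 ->.
split; last first.
  apply: conv_min; first exact: conv_convex.
  move=> z [->|M'z]; apply: conv_sub; [by left | by right].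
move=> _ [y Py <-]; move: Py; rewrite Ueq => -[nu /andP[nu0 nu1] [z Mz <-]].
pose l := nu / 4 + 3 * mu / 4.
pose c := (1 + nu * alpha) / 4.
have l0 : 0 < l * (1 + alpha) by rewrite /l; nra.
have ln0 : l * (1 + alpha) != 0 by rewrite gt_eqF.
pose w := (c / (l * (1 + alpha))) *: z + (1 - c / (l * (1 + alpha))) *: x.
have -> : 4^-1 *: ((1 + nu * alpha) *: z + nu *: p) +
          (3 / 4) *: ((1 + mu * alpha) *: x + mu *: p) =
          l *: ((1 + alpha) *: w + p) + (1 - l) *: x.
  apply/rowP => i; rewrite /w /l /c in ln0 *; rewrite !mxE.
  field; apply/andP; split; rewrite gt_eqF //; lra.
apply: conv_comb; [right | by left | rewrite /l; lra | rewrite /l; lra].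
exists w => //; apply: convM => //.
  by apply: divr_ge0 => //; [rewrite /c; nra | exact: ltW].
rewrite ler_pdivrMr // mul1r /c /l; nra.
Qed.
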